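(* Let $\mathcal{A}=(Q,\delta,s)$ be an NFA over a finite alphabet $\Sigma$ and let $\mathcal{P}$ be any forward-stable partition on $\mathcal{A}$. Then $B_{\mathcal{P}}:=\{(u,v)\in Q\times Q: u,v\in S \text{ for some } S\in\mathcal{P}\}$ is a bisimulation on $\mathcal{A}^{-1}$.
   Context: An NFA is $\mathcal{A}=(Q,\delta,s)$ with $\delta:Q\times\Sigma\to2^Q$; write $\delta_a(u)=\delta(u,a)$, $\delta_a(T)=\bigcup_{u\in T}\delta_a(u)$, $\delta_a^{-1}(u)=\{v:u\in\delta_a(v)\}$. $\mathcal{A}^{-1}=(Q,\delta^{-1},s)$ with $\delta^{-1}(u,a)=\delta^{-1}_a(u)$. A bisimulation on an NFA $(Q,\gamma,s)$ is a relation $B\subseteq Q\times Q$ such that for all $(u,v)\in B$ and $a\in\Sigma$: if $u'\in\gamma_a(u)$ then some $v'\in\gamma_a(v)$ has $(u',v')\in B$, and if $v'\in\gamma_a(v)$ then some $u'\in\gamma_a(u)$ has $(u',v')\in B$. A partition $\mathcal{P}$ of $Q$ is forward-stable on $\mathcal{A}$ if for any parts $S,T\in\mathcal{P}$ and every $a$, $S\subseteq\delta_a(T)$ or $S\cap\delta_a(T)=\emptyset$. *)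

(* Defs.v *)
From mathcomp Require Import all_boot.
Set Implicit Arguments. Unset Strict Implicit. Unset Printing Implicit Defensive.

Record NFA (Sigma : finType) := MkNFA {
  state : finType;
  trans : state -> Sigma -> {set state};
  start : state }.

Definition img (Sigma : finType) (Q : finType) (gamma : Q -> Sigma -> {set Q})
  (a : Sigma) (T : {set Q}) : {set Q} := \bigcup_(u in T) gamma u a.

Definition inv_trans (Sigma Q : finType) (gamma : Q -> Sigma -> {set Q})
  : Q -> Sigma -> {set Q} := fun u a => [set v | u \in gamma v a].

Definition inv_nfa (Sigma : finType) (A : NFA Sigma) : NFA Sigma :=
  @MkNFA Sigma (state A) (inv_trans (@trans Sigma A)) (start A).

Definition bisimulation (Sigma : finType) (A : NFA Sigma)
  (B : state A -> state A -> Prop) : Prop :=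
  forall u v, B u v -> forall a : Sigma,
    (forall u', u' \in trans u a -> exists v', v' \in trans v a /\ B u' v') /\
    (forall v', v' \in trans v a -> exists u', u' \in trans u a /\ B u' v').

Definition forward_stable (Sigma : finType) (A : NFA Sigma)
  (P : {set {set state A}}) : Prop :=
  partition P [set: state A] /\
  forall S T, S \in P -> T \in P -> forall a : Sigma,
    S \subset img (@trans Sigma A) a T \/ S :&: img (@trans Sigma A) a T = set0.

Definition B_of (Q : finType) (P : {set {set Q}}) (u v : Q) : Prop :=
  exists2 S, S \in P & (u \in S) && (v \in S).

(* Main.v *)
Require Import Defs.
From mathcomp Require Import all_boot.

Lemma key (Sigma : finType) (A : NFA Sigma) (P : {set {set state A}}) :
  forward_stable P -> forall (S : {set state A}) u v a u', S \in P -> u \in S -> v \in S ->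
  u \in trans u' a -> exists v', v \in trans v' a /\ B_of P u' v'.
Proof.
case=> [Hp Hst] S u v a u' SP uS vS uu'.
have cov : u' \in cover P by move: Hp => /and3P [/eqP -> _ _]; rewrite inE.
set T := pblock P u'.
have TP : T \in P by apply: pblock_mem.
have u'T : u' \in T by rewrite mem_pblock.
have uimg : u \in img (@trans Sigma A) a T by apply/bigcupP; exists u'.
case: (Hst S T SP TP a) => [sub|dis].
  have : v \in img (@trans Sigma A) a T by apply: (subsetP sub).
  case/bigcupP=> v' v'T vv'.
  by exists v'; split => //; exists T => //; rewrite u'T v'T.
have : u \in S :&: img (@trans Sigma A) a T by rewrite inE uS uimg.
by rewrite dis inE.
Qed.

Theorem lemma21 (Sigma : finType) (A : NFA Sigma) (P : {set {set state A}}) :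
  @forward_stable Sigma A P -> @bisimulation Sigma (inv_nfa A) (@B_of (state A) P).
Proof.
move=> H u v [S SP /andP [uS vS]] a; split.
  move=> u'; rewrite /= /inv_trans inE => uu'.
  have [v' [vv' HB]] := @key _ _ _ H _ _ _ _ _ SP uS vS uu'.
  by exists v'; rewrite inE.
move=> v'; rewrite /= /inv_trans inE => vv'.
have [u' [uu' [T TP /andP [a1 a2]]]] := @key _ _ _ H _ _ _ _ _ SP vS uS vv'.
by exists u'; rewrite inE; split => //; exists T => //; rewrite a1 a2.
Qed.
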